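(* Let $\mathfrak g$ be a Lie algebra over $\mathbb F$ ($\mathbb F=\mathbb R$ or $\mathbb C$) with center $\mathfrak z(\mathfrak g)$, let $c\in\mathbb F$, let $R$ be a linear endomorphism of $\mathfrak g$, and let $\mathcal R$ be the endomorphism of $\mathfrak g\times\mathfrak g$ defined by $\mathcal R(x,y)=\big(R(x-y)+cy,\;R(x-y)+cx\big)$. Then $\mathcal R$ is an $R$-matrix of the Lie algebra $\mathfrak g\times\mathfrak g$ (with componentwise bracket) if and only if $$B_R(x,y)+c^2[x,y]\in\mathfrak z(\mathfrak g)\qquad\text{for all }x,y\in\mathfrak g.$$ In particular, if $\mathfrak g$ is a complex semisimple Lie algebra, $\mathcal R$ is an $R$-matrix of $\mathfrak g\times\mathfrak g$ if and only if $R$ satisfies the modified classical Yang–Baxter equation of constant $c$.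
   Context: For a Lie algebra $\mathfrak a$ and a linear endomorphism $S$ of $\mathfrak a$, put $[x,y]_S=\tfrac12([Sx,y]+[x,Sy])$ and $B_S(x,y)=[Sx,Sy]-S([Sx,y]+[x,Sy])$. $S$ is called an $R$-matrix of $\mathfrak a$ if $[\cdot,\cdot]_S$ is a Lie bracket on $\mathfrak a$. $S$ satisfies the modified classical Yang–Baxter equation (mCYBE) of constant $c$ if $B_S(x,y)=-c^2[x,y]$ for all $x,y\in\mathfrak a$. The Lie algebra $\mathfrak g\times\mathfrak g$ carries the bracket $[(x,y),(z,s)]=([x,z],[y,s])$. *)

(* Defs.v *)
From HB Require Import structures.
From mathcomp Require Import all_boot all_order all_algebra.
Set Implicit Arguments. Unset Strict Implicit. Unset Printing Implicit Defensive.
Import Order.TTheory GRing.Theory Num.Theory.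
Local Open Scope ring_scope.

Section LieDefs.
Variables (F : numFieldType) (V : lmodType F).

Definition is_lie_bracket (br : V -> V -> V) : Prop :=
  [/\ (forall a x y z, br (a *: x + y) z = a *: br x z + br y z),
      (forall a x y z, br x (a *: y + z) = a *: br x y + br x z),
      (forall x, br x x = 0) &
      (forall x y z, br x (br y z) + br y (br z x) + br z (br x y) = 0)].

Definition bracketS (br : V -> V -> V) (S : V -> V) : V -> V -> V :=
  fun x y => 2%:R^-1 *: (br (S x) y + br x (S y)).

Definition is_Rmatrix (br : V -> V -> V) (S : V -> V) : Prop :=
  is_lie_bracket (bracketS br S).

Definition BS (br : V -> V -> V) (S : V -> V) (x y : V) : V :=
  br (S x) (S y) - S (br (S x) y + br x (S y)).

Definition mCYBE (br : V -> V -> V) (S : V -> V) (c : F) : Prop :=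
  forall x y, BS br S x y = - (c ^+ 2) *: br x y.

Definition in_center (br : V -> V -> V) (z : V) : Prop :=
  forall x, br z x = 0.

Definition is_subspace (W : V -> Prop) : Prop :=
  W 0 /\ forall a u v, W u -> W v -> W (a *: u + v).

Definition is_ideal (br : V -> V -> V) (I : V -> Prop) : Prop :=
  is_subspace I /\ forall x y, I x -> I (br x y).

Definition derived (br : V -> V -> V) (I : V -> Prop) : V -> Prop :=
  fun v => forall W, is_subspace W ->
    (forall x y, I x -> I y -> W (br x y)) -> W v.

Definition derived_series (br : V -> V -> V) (I : V -> Prop) (n : nat) : V -> Prop :=
  iter n (derived br) I.

Definition solvable_ideal (br : V -> V -> V) (I : V -> Prop) : Prop :=
  is_ideal br I /\ exists n, forall v, derived_series br I n v -> v = 0.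

Definition semisimple (br : V -> V -> V) : Prop :=
  forall I, solvable_ideal br I -> forall v, I v -> v = 0.

End LieDefs.

Definition prod_bracket (F : numFieldType) (V : lmodType F) (br : V -> V -> V)
  (u v : V * V) : V * V := (br u.1 v.1, br u.2 v.2).

Definition calR (F : numFieldType) (V : lmodType F) (R : V -> V) (c : F)
  (u : V * V) : V * V :=
  (R (u.1 - u.2) + c *: u.2, R (u.1 - u.2) + c *: u.1).

(* Main.v *)
Require Import Defs.
From HB Require Import structures.
From mathcomp Require Import all_boot all_order all_algebra ssrAC.
Import Order.TTheory GRing.Theory Num.Theory.
Set Implicit Arguments. Unset Strict Implicit.
Local Open Scope ring_scope.

Lemma rearr (F : numFieldType) (V : lmodType F) (X RQ CP Y Z T : V) :
  X + (T + RQ) = Y + Z + (RQ + CP) -> X - (RQ + CP) = Y - RQ + Z - T.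
Proof.
move=> h; have -> : X = Y + Z + (RQ + CP) - (T + RQ) by rewrite -h addrK.
rewrite !opprD !addrA [LHS](@GRing.add V).[ACl (1*6*2*5*3*7*4*8)].
by rewrite !addrK.
Qed.

Lemma pD (F : numFieldType) (V : lmodType F) (p q : V * V) : p + q = (p.1 + q.1, p.2 + q.2).
Proof. by case: p q => ? ? [? ?]. Qed.

Lemma pZ (F : numFieldType) (V : lmodType F) (a : F) (p : V * V) : a *: p = (a *: p.1, a *: p.2).
Proof. by case: p. Qed.

Section Lie.
Variables (F : numFieldType) (W : lmodType F) (br : W -> W -> W).
Hypothesis Hbr : is_lie_bracket br.

Lemma br0l z : br 0 z = 0.
Proof.
case: Hbr => Hl _ _ _.
have := Hl 1 0 0 z; rewrite !scale1r addr0 => h.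
by have := congr1 (fun t => t - br 0 z) h; rewrite /= addrK subrr => <-.
Qed.
Lemma br0r z : br z 0 = 0.
Proof.
case: Hbr => _ Hr _ _.
have := Hr 1 z 0 0; rewrite !scale1r addr0 => h.
by have := congr1 (fun t => t - br z 0) h; rewrite /= addrK subrr => <-.
Qed.
Lemma brDl x y z : br (x + y) z = br x z + br y z.
Proof. case: Hbr => Hl _ _ _; by have := Hl 1 x y z; rewrite !scale1r. Qed.
Lemma brDr x y z : br z (x + y) = br z x + br z y.
Proof. case: Hbr => _ Hr _ _; by have := Hr 1 z x y; rewrite !scale1r. Qed.
Lemma brZl a x z : br (a *: x) z = a *: br x z.
Proof. case: Hbr => Hl _ _ _; by have := Hl a x 0 z; rewrite !addr0 br0l addr0. Qed.
Lemma brZr a x z : br z (a *: x) = a *: br z x.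
Proof. case: Hbr => _ Hr _ _; by have := Hr a z x 0; rewrite !addr0 br0r addr0. Qed.
Lemma brNl x z : br (- x) z = - br x z.
Proof. by rewrite -scaleN1r brZl scaleN1r. Qed.
Lemma brNr x z : br z (- x) = - br z x.
Proof. by rewrite -scaleN1r brZr scaleN1r. Qed.
Lemma brBl x y z : br (x - y) z = br x z - br y z.
Proof. by rewrite brDl brNl. Qed.
Lemma brBr x y z : br z (x - y) = br z x - br z y.
Proof. by rewrite brDr brNr. Qed.
Lemma brC x y : br x y = - br y x.
Proof.
case: Hbr => _ _ Ha _.
have := Ha (x + y); rewrite brDl !brDr !Ha add0r addr0 => /eqP.
by rewrite addr_eq0 => /eqP.
Qed.
Lemma jac x y z : br x (br y z) + br y (br z x) + br z (br x y) = 0.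
Proof. by case: Hbr. Qed.

Lemma jac2 x y z : br (br x y) z + br (br y z) x + br (br z x) y = 0.
Proof.
rewrite [br (br x y) z]brC [br (br y z) x]brC [br (br z x) y]brC -!opprD.
apply/eqP; rewrite oppr_eq0; apply/eqP.
by rewrite [LHS](@GRing.add W).[ACl (2*3*1)] jac.
Qed.

Variable S : W -> W.
Hypothesis SD : forall x y, S (x + y) = S x + S y.
Hypothesis SZ : forall a x, S (a *: x) = a *: S x.

Definition PP x y := br (S x) y + br x (S y).

Lemma Jid x y z :
  PP x (PP y z) + PP y (PP z x) + PP z (PP x y) =
  br (BS br S x y) z + br (BS br S y z) x + br (BS br S z x) y.
Proof.
have hP : forall x y z, PP x (PP y z) =
   br (S x) (br (S y) z) + br (S x) (br y (S z)) + br x (S (PP y z)).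
  by move=> a b d; rewrite {1}/PP /PP brDr.
have hB : forall x y z, br (BS br S x y) z =
   br (br (S x) (S y)) z + br z (S (PP x y)).
  by move=> a b d; rewrite /BS brBl -brC.
have hJ : forall x y z, br (br (S x) (S y)) z =
   br (S x) (br (S y) z) + br (S y) (br z (S x)).
  move=> a b d; apply/eqP; rewrite brC eq_sym -addr_eq0.
  by rewrite jac.
rewrite !hP !hB !hJ !addrA.
by rewrite [LHS](ACl (1*5*9*4*8*3*7*2*6)).
Qed.


Lemma bS_PP x y : bracketS br S x y = 2%:R^-1 *: PP x y.
Proof. by []. Qed.

Lemma S0 : S 0 = 0.
Proof. by have := SZ 0 0; rewrite !scale0r. Qed.

Lemma Rmatrix_iff : is_Rmatrix br S <->
  (forall x y z, br (BS br S x y) z + br (BS br S y z) x + br (BS br S z x) y = 0).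
Proof.
have k0 : (2%:R^-1 * 2%:R^-1 : F) != 0.
  by rewrite mulf_neq0 // invr_eq0 pnatr_eq0.
have hJ : forall x y z, bracketS br S x (bracketS br S y z) + bracketS br S y (bracketS br S z x)
   + bracketS br S z (bracketS br S x y) = (2%:R^-1 * 2%:R^-1) *:
  (br (BS br S x y) z + br (BS br S y z) x + br (BS br S z x) y).
  move=> x y z; rewrite -Jid !bS_PP {1 3 5}/PP !brZr !SZ !brZr -!scalerDr !scalerA.
  by rewrite !scalerDr.
split.
  case=> _ _ _ J x y z; have := J x y z; rewrite hJ => /eqP.
  by rewrite scaler_eq0 (negbTE k0) /= => /eqP.
move=> H; split.
- move=> a x y z; rewrite !bS_PP /PP SD SZ ?brDl ?brDr ?brZl ?brZr.
  rewrite [in RHS]scalerA [a * _]mulrC -scalerA -scalerDr; congr (_ *: _).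
  by rewrite scalerDr !addrA [LHS](ACl (1*3*2*4)).
- move=> a x y z; rewrite !bS_PP /PP SD SZ ?brDl ?brDr ?brZl ?brZr.
  rewrite [in RHS]scalerA [a * _]mulrC -scalerA -scalerDr; congr (_ *: _).
  by rewrite scalerDr !addrA [LHS](ACl (1*3*2*4)).
- by move=> x; rewrite bS_PP /PP [br (S x) x]brC addNr scaler0.
- by move=> x y z; rewrite hJ H scaler0.
Qed.

End Lie.

Section Prod.
Variables (F : numFieldType) (V : lmodType F) (br : V -> V -> V) (c : F) (R : {linear V -> V}).
Hypothesis Hbr : is_lie_bracket br.

Definition KK a b := BS br R a b + c ^+ 2 *: br a b.

Lemma BS1 u v : (BS (prod_bracket br) (calR R c) u v).1 =
  KK (u.1 - u.2) (v.1 - v.2) - c ^+ 2 *: br u.1 v.1.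
Proof.
case: u v => [x1 x2] [y1 y2] /=.
rewrite -[x1](subrK x2) -[y1](subrK y2); move: (x1 - x2) (y1 - y2) => a b.
rewrite /KK /BS /prod_bracket /calR /= !addrK.
have L1 : br (R a + c *: x2) (b + y2) + br (a + x2) (R b + c *: y2) -
      (br (R a + c *: (a + x2)) y2 + br x2 (R b + c *: (b + y2))) = br (R a) b + br a (R b).
  apply/eqP; rewrite subr_eq; apply/eqP.
  rewrite !(brDl Hbr, brDr Hbr, brZl Hbr, brZr Hbr) !scalerDr !addrA.
  by rewrite [LHS](ACl (1*5*3*6*4*7*2*8)).
rewrite L1; apply: rearr.
rewrite !(brDl Hbr, brDr Hbr, brZl Hbr, brZr Hbr) !scalerDr !scalerA expr2 !addrA.
by rewrite [LHS](ACl (1*5*9*2*6*4*3*7*8)).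
Qed.

Lemma BS2 u v : (BS (prod_bracket br) (calR R c) u v).2 =
  KK (u.1 - u.2) (v.1 - v.2) - c ^+ 2 *: br u.2 v.2.
Proof.
case: u v => [x1 x2] [y1 y2] /=.
rewrite -[x1](subrK x2) -[y1](subrK y2); move: (x1 - x2) (y1 - y2) => a b.
rewrite /KK /BS /prod_bracket /calR /= !addrK.
have L1 : br (R a + c *: x2) (b + y2) + br (a + x2) (R b + c *: y2) -
      (br (R a + c *: (a + x2)) y2 + br x2 (R b + c *: (b + y2))) = br (R a) b + br a (R b).
  apply/eqP; rewrite subr_eq; apply/eqP.
  rewrite !(brDl Hbr, brDr Hbr, brZl Hbr, brZr Hbr) !scalerDr !addrA.
  by rewrite [LHS](ACl (1*5*3*6*4*7*2*8)).
rewrite L1; apply: rearr.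
rewrite !(brDl Hbr, brDr Hbr, brZl Hbr, brZr Hbr) !scalerDr !scalerA expr2 !addrA.
by rewrite [LHS](ACl (1*6*11*2*3*8*9*4*5*7*10)).
Qed.

Lemma prod_lie : is_lie_bracket (prod_bracket br).
Proof.
split.
- by move=> a [x1 x2] [y1 y2] [z1 z2]; rewrite /prod_bracket /= !(brDl Hbr, brZl Hbr).
- by move=> a [x1 x2] [y1 y2] [z1 z2]; rewrite /prod_bracket /= !(brDr Hbr, brZr Hbr).
- by case: Hbr => _ _ H _ [x1 x2]; rewrite /prod_bracket /= !H.
- case: Hbr => _ _ _ H [x1 x2] [y1 y2] [z1 z2]; rewrite /prod_bracket /=.
  by rewrite !pD /= !H.
Qed.

Lemma calRD u v : calR R c (u + v) = calR R c u + calR R c v.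
Proof.
case: u v => [x1 x2] [y1 y2]; rewrite /calR /= pD /=.
rewrite opprD [_ + _ + (- _ - _)]addrACA (raddfD R) !scalerDr.
by congr pair; rewrite !addrA [LHS](ACl (1*3*2*4)).
Qed.

Lemma calRZ a u : calR R c (a *: u) = a *: calR R c u.
Proof.
case: u => [x1 x2]; rewrite /calR /=.
by rewrite pZ /= -scalerBr linearZ /= !scalerDr !scalerA mulrC.
Qed.

Lemma pD1 (p q : V * V) : (p + q).1 = p.1 + q.1. Proof. by []. Qed.
Lemma pD2 (p q : V * V) : (p + q).2 = p.2 + q.2. Proof. by []. Qed.
Lemma pb1 (p q : V * V) : (prod_bracket br p q).1 = br p.1 q.1. Proof. by []. Qed.
Lemma pb2 (p q : V * V) : (prod_bracket br p q).2 = br p.2 q.2. Proof. by []. Qed.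

Lemma KK0r a : KK a 0 = 0.
Proof. by rewrite /KK /BS !(raddf0 R, br0r Hbr, addr0, scaler0, subrr). Qed.
Lemma KK0l a : KK 0 a = 0.
Proof. by rewrite /KK /BS !(raddf0 R, br0l Hbr, add0r, scaler0, subrr, oppr0). Qed.

Lemma cyc1 u v w :
  (prod_bracket br (BS (prod_bracket br) (calR R c) u v) w +
   prod_bracket br (BS (prod_bracket br) (calR R c) v w) u +
   prod_bracket br (BS (prod_bracket br) (calR R c) w u) v).1 =
  br (KK (u.1-u.2) (v.1-v.2)) w.1 + br (KK (v.1-v.2) (w.1-w.2)) u.1 +
  br (KK (w.1-w.2) (u.1-u.2)) v.1.
Proof.
rewrite !pD1 !pb1 !BS1 !(brBl Hbr) !(brZl Hbr) !addrA.
rewrite [LHS](@GRing.add V).[ACl (1*3*5*2*4*6)] -!addrA -!opprD -!scalerDr.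
by rewrite [in br _ _ + (br _ _ + br _ _)]addrA (jac2 Hbr) scaler0 oppr0 addr0 !addrA.
Qed.

Lemma cyc2 u v w :
  (prod_bracket br (BS (prod_bracket br) (calR R c) u v) w +
   prod_bracket br (BS (prod_bracket br) (calR R c) v w) u +
   prod_bracket br (BS (prod_bracket br) (calR R c) w u) v).2 =
  br (KK (u.1-u.2) (v.1-v.2)) w.2 + br (KK (v.1-v.2) (w.1-w.2)) u.2 +
  br (KK (w.1-w.2) (u.1-u.2)) v.2.
Proof.
rewrite !pD2 !pb2 !BS2 !(brBl Hbr) !(brZl Hbr) !addrA.
rewrite [LHS](@GRing.add V).[ACl (1*3*5*2*4*6)] -!addrA -!opprD -!scalerDr.
by rewrite [in br _ _ + (br _ _ + br _ _)]addrA (jac2 Hbr) scaler0 oppr0 addr0 !addrA.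
Qed.

Lemma center0 z : semisimple br -> in_center br z -> z = 0.
Proof.
move=> Hs Hz; apply: (Hs (in_center br)) => //; split.
- split; first split.
  + by move=> x; rewrite (br0l Hbr).
  + by move=> a u v Hu Hv x; rewrite (brDl Hbr) (brZl Hbr) Hu Hv scaler0 addr0.
  + by move=> x y Hx t; rewrite Hx (br0l Hbr).
- exists 1%N => v /= Hv; apply: (Hv (fun v => v = 0)).
  + by split => // a p q -> ->; rewrite scaler0 addr0.
  + by move=> x y Hx _; rewrite Hx.
Qed.

Lemma main_part1 :
  is_Rmatrix (prod_bracket br) (calR R c) <->
     (forall x y : V, in_center br (BS br R x y + (c ^+ 2) *: br x y)).
Proof.
apply: iff_trans (Rmatrix_iff prod_lie calRD calRZ) _; split.
- move=> H x y z; have := congr1 fst (H (x, 0) (y, 0) (z, z)).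
  rewrite cyc1 /= !subr0 subrr KK0r KK0l !(br0l Hbr) !addr0.
  by [].
- move=> H u v w; rewrite [LHS]surjective_pairing cyc1 cyc2 /KK !H !addr0.
  by [].
Qed.

Lemma main_part2 : semisimple br ->
     (is_Rmatrix (prod_bracket br) (calR R c) <-> mCYBE br R c).
Proof.
move=> Hs; apply: iff_trans main_part1 _; split.
- move=> H x y; apply/eqP; rewrite scaleNr -addr_eq0; apply/eqP.
  exact: center0 (H x y).
- move=> H x y; rewrite H scaleNr addNr => t; exact: br0l Hbr t.
Qed.

End Prod.

Theorem proposition2p1 (F : numFieldType) (V : lmodType F)
  (br : V -> V -> V) (c : F) (R : {linear V -> V}) :
  is_lie_bracket br ->
  (is_Rmatrix (prod_bracket br) (calR R c) <->
     (forall x y : V, in_center br (BS br R x y + (c ^+ 2) *: br x y)))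
  /\
  (semisimple br ->
     (is_Rmatrix (prod_bracket br) (calR R c) <-> mCYBE br R c)).
Proof.
move=> Hbr; split; [exact: main_part1 | exact: main_part2].
Qed.
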